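(* Let $T$ be a tree with root $r$, edges directed towards $r$, edge set $E$, and let $B,R$ be disjoint sets of leaves of $T$. Then there are sets $X,Y\subseteq E$ such that $\bar r(X)=Y$ and $\bar b(Y)=X$.
   Context: Edges are ordered pairs $st$ pointing from $s$ to $t$, directed towards $r$; a leaf is a vertex with no incoming edges. $A(v,X)$ is the number of edges of $X$ pointing to $v$ minus the number of edges of $X$ pointing away from $v$, and $A(v,X,Y)=A(v,X)-A(v,Y)$. The \emph{blue overflow} $\bar b(X)$ of $X\subseteq E$ is defined by transfinite recursion: $Y_0$ is the set of all edges in $E\setminus X$ whose starting vertex is in $B$; at a successor $\alpha=\beta+1$, if every $st\in E\setminus(X\cup Y_\beta)$ satisfies $A(s,Y_\beta,X)\le 0$, stop and set $\bar b(X)=Y_\beta$; otherwise pick some $st\in E\setminus (X\cup Y_\beta)$ with $A(s,Y_\beta,X)\ge 1$ and let $Y_\alpha=Y_\beta\cup\{st\}$; at limits $Y_\alpha=\bigcup_{\beta<\alpha}Y_\beta$. (The result does not depend on the choices made.) The \emph{red overflow} $\bar r(X)$ is defined identically with $R$ in place of $B$. *)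

(* Defs.v *)
(* Edges are ordered pairs (s,t) pointing from s to t. *)
From Stdlib Require Import List ZArith Relations.
Import ListNotations.
Open Scope Z_scope.

Section Defs.
Variable V : Type.

Definition edge := (V * V)%type.
Definition eset := edge -> Prop.

Definition rooted_tree (E : V -> V -> Prop) (r : V) : Prop :=
  (forall w, ~ E r w) /\
  (forall v, v <> r -> exists w, E v w /\ forall w', E v w' -> w' = w) /\
  (forall v, clos_refl_trans V E v r).

(* every vertex has finitely many incoming edges (needed for A to be an integer) *)
Definition locally_finite (E : V -> V -> Prop) : Prop :=
  forall v, exists l : list V, forall u, E u v -> In u l.

Definition leaf (E : V -> V -> Prop) (v : V) : Prop := forall u, ~ E u v.

Definition card_eq (P : V -> Prop) (n : nat) : Prop :=
  exists l : list V, NoDup l /\ length l = n /\ forall x, P x <-> In x l.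

Definition A_val (E : V -> V -> Prop) (X : eset) (v : V) (z : Z) : Prop :=
  exists i o : nat,
    card_eq (fun u => E u v /\ X (u, v)) i /\
    card_eq (fun w => E v w /\ X (v, w)) o /\
    z = Z.of_nat i - Z.of_nat o.

Definition A2_ge1 (E : V -> V -> Prop) (v : V) (X Y : eset) : Prop :=
  exists a b, A_val E X v a /\ A_val E Y v b /\ a - b >= 1.

Definition A2_le0 (E : V -> V -> Prop) (v : V) (X Y : eset) : Prop :=
  forall a b, A_val E X v a -> A_val E Y v b -> a - b <= 0.

Definition eset_eq (X Y : eset) : Prop := forall e, X e <-> Y e.

Definition overflow_start (E : V -> V -> Prop) (C : V -> Prop) (X : eset) : eset :=
  fun e => E (fst e) (snd e) /\ ~ X e /\ C (fst e).

(* Y is the outcome of SOME run of the transfinite recursion defining the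
   C-overflow of X.  A run is encoded by the set D of edges added at
   successor steps, well-ordered by the time lt at which they are added:
   the edge e = st added at step beta+1 satisfies st notin X u Y_beta and
   A(s, Y_beta, X) >= 1, where Y_beta = Y_0 u {f in D | f lt e}; at the
   stopping stage every st in E \ (X u Y) has A(s, Y, X) <= 0. *)
Definition overflow_outcome (E : V -> V -> Prop) (C : V -> Prop) (X Y : eset) : Prop :=
  exists (D : eset) (lt : edge -> edge -> Prop),
    let Y0 := overflow_start E C X in
    (forall e, Y e <-> Y0 e \/ D e) /\
    (forall e, D e -> E (fst e) (snd e) /\ ~ X e /\ ~ Y0 e) /\
    (forall e, D e -> ~ lt e e) /\
    (forall e f g, D e -> D f -> D g -> lt e f -> lt f g -> lt e g) /\
    (forall e f, D e -> D f -> e = f \/ lt e f \/ lt f e) /\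
    (forall P : eset, (forall e, P e -> D e) -> (exists e, P e) ->
        exists m, P m /\ forall e, P e -> ~ lt e m) /\
    (forall e, D e ->
        A2_ge1 E (fst e) (fun f => Y0 f \/ (D f /\ lt f e)) X) /\
    (forall s t, E s t -> ~ X (s, t) -> ~ Y (s, t) -> A2_le0 E s Y X).

(* overflow E C X = Y : Y is the (choice-independent) result of the recursion:
   some run produces Y, and every run produces Y. *)
Definition overflow_is (E : V -> V -> Prop) (C : V -> Prop) (X Y : eset) : Prop :=
  overflow_outcome E C X Y /\ forall Z, overflow_outcome E C X Z -> eset_eq Z Y.

End Defs.

Arguments rooted_tree {V}.
Arguments locally_finite {V}.
Arguments leaf {V}.
Arguments overflow_is {V}.

(* Main.v *)
Require Import Defs.
From Stdlib Require Import List ZArith Relations Lia Classical ClassicalEpsilon Cantor Arith.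
Import ListNotations.
Open Scope nat_scope.

Section Main.
Variable V : Type.
Variable E : V -> V -> Prop.
Variable r : V.
Hypothesis Htree : rooted_tree E r.
Hypothesis Hfin : locally_finite E.

Definition bP (P : Prop) : bool := if excluded_middle_informative P then true else false.
Lemma bP_true P : bP P = true <-> P.
Proof. unfold bP; destruct (excluded_middle_informative P); split; intros; auto; discriminate. Qed.

Definition veq (x y : V) : {x = y} + {x <> y} := excluded_middle_informative (x = y).

Definition ch (v : V) : list V :=
  nodup veq (filter (fun u => bP (E u v)) (proj1_sig (constructive_indefinite_description _ (Hfin v)))).

Lemma ch_spec v : NoDup (ch v) /\ forall u, In u (ch v) <-> E u v.
Proof.
  unfold ch. destruct (constructive_indefinite_description _ (Hfin v)) as [l Hl]; simpl.
  split. apply NoDup_nodup.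
  intro u. rewrite nodup_In, filter_In, bP_true. split; [tauto|intro; split; auto].
Qed.

Definition inc (Z : eset V) (s : V) : nat := length (filter (fun u => bP (Z (u, s))) (ch s)).

Lemma card_eq_list P l n : NoDup l -> (forall x, P x <-> In x l) -> (card_eq V P n <-> n = length l).
Proof.
  intros nd h; split.
  - intros [l' [nd' [len' h']]]. subst n.
    assert (length l' <= length l) by (apply NoDup_incl_length; auto; intros x Hx; apply h, h', Hx).
    assert (length l <= length l') by (apply NoDup_incl_length; auto; intros x Hx; apply h', h, Hx).
    lia.
  - intros ->. exists l; auto.
Qed.

Lemma card_unique P n m : card_eq V P n -> card_eq V P m -> n = m.
Proof.
  intros H1 H2. destruct H1 as [l [nd [len h]]].
  apply (card_eq_list P l m nd h) in H2. lia.
Qed.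

Lemma inc_card Z s : card_eq V (fun u => E u s /\ Z (u, s)) (inc Z s).
Proof.
  exists (filter (fun u => bP (Z (u, s))) (ch s)). destruct (ch_spec s) as [nd h].
  split; [apply NoDup_filter; auto|split; auto].
  intro x. rewrite filter_In, bP_true, h. tauto.
Qed.

Lemma unique_out s t w : E s t -> E s w -> w = t.
Proof.
  destruct Htree as [H1 [H2 H3]]. intros est esw.
  assert (s <> r) by (intro; subst; eapply H1; eauto).
  destruct (H2 s H) as [x [_ hx]]. rewrite (hx t est), (hx w esw). auto.
Qed.

Lemma out0 (Z : eset V) s t : E s t -> ~ Z (s, t) -> card_eq V (fun w => E s w /\ Z (s, w)) 0.
Proof.
  intros est nz. exists []. split; [constructor|split; auto].
  intros x; split; [|intros []]. intros [ex zx]. rewrite (unique_out s t x est ex) in zx. tauto.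
Qed.

Lemma A_val_eq (Z : eset V) s t a : E s t -> ~ Z (s, t) ->
  (A_val V E Z s a <-> a = Z.of_nat (inc Z s)).
Proof.
  intros est nz. split.
  - intros [i [o [hi [ho ha]]]].
    rewrite (card_unique _ _ _ hi (inc_card Z s)) in ha.
    rewrite (card_unique _ _ _ ho (out0 Z s t est nz)) in ha. lia.
  - intros ->. exists (inc Z s), 0%nat. split; [apply inc_card|split; [eapply out0; eauto|lia]].
Qed.

Lemma A2_ge1_iff s t (Y X : eset V) : E s t -> ~ Y (s, t) -> ~ X (s, t) ->
  (A2_ge1 V E s Y X <-> (inc X s < inc Y s)%nat).
Proof.
  intros est ny nx. split.
  - intros [a [b [ha [hb hab]]]]. rewrite (A_val_eq Y s t a est ny) in ha.
    rewrite (A_val_eq X s t b est nx) in hb. lia.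
  - intros h. exists (Z.of_nat (inc Y s)), (Z.of_nat (inc X s)).
    rewrite (A_val_eq Y s t _ est ny), (A_val_eq X s t _ est nx). lia.
Qed.

Lemma A2_le0_iff s t (Y X : eset V) : E s t -> ~ Y (s, t) -> ~ X (s, t) ->
  (A2_le0 V E s Y X <-> (inc Y s <= inc X s)%nat).
Proof.
  intros est ny nx. split.
  - intros h. specialize (h (Z.of_nat (inc Y s)) (Z.of_nat (inc X s))).
    rewrite (A_val_eq Y s t _ est ny), (A_val_eq X s t _ est nx) in h. lia.
  - intros h a b ha hb. rewrite (A_val_eq Y s t a est ny) in ha.
    rewrite (A_val_eq X s t b est nx) in hb. lia.
Qed.

Lemma filter_len_mono (A : Type) (f g : A -> bool) l :
  (forall x, In x l -> f x = true -> g x = true) -> length (filter f l) <= length (filter g l).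
Proof.
  induction l as [|a l IH]; simpl; intros h; auto.
  destruct (f a) eqn:fa.
  - rewrite (h a (or_introl eq_refl) fa). simpl. apply le_n_S, IH; auto.
  - destruct (g a); simpl; [apply le_S|]; apply IH; auto.
Qed.

Lemma inc_mono (Z1 Z2 : eset V) s : (forall u, E u s -> Z1 (u, s) -> Z2 (u, s)) -> inc Z1 s <= inc Z2 s.
Proof.
  intros h. apply filter_len_mono. intros x hx. rewrite !bP_true. apply h, (proj2 (ch_spec s)), hx.
Qed.
Fixpoint St (C : V -> Prop) (X : eset V) (n : nat) : eset V :=
  match n with
  | 0 => overflow_start V E C X
  | Datatypes.S n' => fun e => St C X n' e \/
      (E (fst e) (snd e) /\ ~ X e /\ inc X (fst e) < inc (St C X n') (fst e))
  end.

Definition U C X : eset V := fun e => exists n, St C X n e.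

Definition Closed C (X Z : eset V) : Prop :=
  (forall e, overflow_start V E C X e -> Z e) /\
  forall s t, E s t -> ~ X (s, t) -> inc X s < inc Z s -> Z (s, t).

Lemma St_mono C X m n e : m <= n -> St C X m e -> St C X n e.
Proof. induction 1; simpl; auto. Qed.

Lemma St_sub C X n e : St C X n e -> E (fst e) (snd e) /\ ~ X e.
Proof.
  induction n; simpl. { unfold overflow_start. tauto. } intros [h|h]; auto; tauto.
Qed.

Lemma U_sub C X e : U C X e -> E (fst e) (snd e) /\ ~ X e.
Proof. intros [n h]. eapply St_sub; eauto. Qed.

Lemma U_least C X Z e : Closed C X Z -> U C X e -> Z e.
Proof.
  intros [h0 h1] [n hn]. revert e hn. induction n; simpl; intros e hn; auto.
  destruct hn as [hn|[he [hx hi]]]; auto.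
  destruct e as [s t]. simpl in *. apply h1; auto.
  eapply Nat.lt_le_trans; [exact hi|]. apply inc_mono. intros u _ hu; apply IHn; auto.
Qed.

Lemma U_fin C X s (l : list V) : exists n, forall u, In u l -> U C X (u, s) -> St C X n (u, s).
Proof.
  induction l as [|a l [n IH]]. { exists 0; intros u []. }
  destruct (classic (U C X (a, s))) as [[m hm]|na].
  - exists (max n m). intros u [<-|hu] hU.
    + eapply St_mono; [|exact hm]. lia.
    + eapply St_mono; [|apply IH; auto]. lia.
  - exists n. intros u [<-|hu] hU; [tauto|auto].
Qed.

Lemma U_closed C X : Closed C X (U C X).
Proof.
  split. { intros e h; exists 0; auto. }
  intros s t est nx hi.
  destruct (U_fin C X s (ch s)) as [n hn].
  exists (Datatypes.S n). simpl. right. split; auto. split; auto. simpl.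
  eapply Nat.lt_le_trans; [exact hi|]. apply inc_mono.
  intros u eu hu. apply hn; auto. apply (proj2 (ch_spec s)); auto.
Qed.

Lemma Closed_anti C (X1 X2 Z : eset V) : (forall e, X1 e -> X2 e) -> Closed C X1 Z -> Closed C X2 Z.
Proof.
  intros hX [h0 h1]. split.
  - intros e [a [b c]]. apply h0. split; auto.
  - intros s t est nx hi. apply h1; auto. eapply Nat.le_lt_trans; [|exact hi].
    apply inc_mono; auto.
Qed.

Lemma U_anti C (X1 X2 : eset V) : (forall e, X1 e -> X2 e) -> forall e, U C X2 e -> U C X1 e.
Proof.
  intros hX e h. eapply U_least; [|exact h]. eapply Closed_anti; [exact hX|]. apply U_closed.
Qed.
Inductive Code : V -> list nat -> Prop :=
| code_r : Code r []
| code_s : forall v w i l, E v w -> nth_error (ch w) i = Some v -> Code w l -> Code v (i :: l).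

Lemma Code_ex v : exists l, Code v l.
Proof.
  destruct Htree as [_ [_ H3]].
  assert (G : forall x y, clos_refl_trans_1n V E x y -> y = r -> exists l, Code x l).
  { intros x y h; induction h; intros hy.
    - subst; exists []; constructor.
    - destruct (IHh hy) as [l hl].
      destruct (In_nth_error (ch y) x) as [i hi]. { apply (proj2 (ch_spec y)); auto. }
      exists (i :: l). econstructor; eauto. }
  exact (G v r (clos_rt_rt1n _ _ _ _ (H3 v)) eq_refl).
Qed.

Lemma Code_fun v l1 l2 : Code v l1 -> Code v l2 -> l1 = l2.
Proof.
  intros h1; revert l2; induction h1; intros l2 h2; inversion h2; subst; auto.
  - destruct Htree as [Hr0 _]. exfalso; eapply Hr0; eauto.
  - destruct Htree as [Hr0 _]. exfalso; eapply Hr0; eauto.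
  - rename w0 into w'. pose proof (unique_out v w w' H H1); subst w'.
    rewrite (IHh1 _ H3). f_equal.
    destruct (ch_spec w) as [nd _].
    apply (proj1 (NoDup_nth_error _) nd); [|congruence].
    apply nth_error_Some; congruence.
Qed.

Lemma Code_inj v v' l : Code v l -> Code v' l -> v = v'.
Proof.
  intros h1; revert v'; induction h1; intros v' h2; inversion h2; subst; auto.
  rewrite (IHh1 _ H6) in H0. congruence.
Qed.

Fixpoint enc (l : list nat) : nat :=
  match l with [] => 0 | x :: l => Datatypes.S (Cantor.to_nat (x, enc l)) end.

Lemma enc_inj l1 l2 : enc l1 = enc l2 -> l1 = l2.
Proof.
  revert l2; induction l1 as [|a l1 IH]; intros [|b l2]; cbn [enc]; intros h; try discriminate; auto.
  assert (h' : Cantor.to_nat (a, enc l1) = Cantor.to_nat (b, enc l2)).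
  { change (Datatypes.S (Cantor.to_nat (a, enc l1)) = Datatypes.S (Cantor.to_nat (b, enc l2))) in h.
    exact (f_equal Nat.pred h). }
  clear h. rename h' into h. apply (f_equal Cantor.of_nat) in h. rewrite !Cantor.cancel_of_to in h.
  injection h as -> h. f_equal; auto.
Qed.

Definition Key (e : edge V) (k : nat) := exists l, Code (fst e) l /\ enc l = k.

Lemma Key_ex e : exists k, Key e k.
Proof. destruct (Code_ex (fst e)) as [l hl]. exists (enc l), l; auto. Qed.

Lemma Key_fun e k j : Key e k -> Key e j -> k = j.
Proof. intros [l [h <-]] [l' [h' <-]]. rewrite (Code_fun _ _ _ h h'); auto. Qed.

Lemma Key_inj (e f : edge V) k : E (fst e) (snd e) -> E (fst f) (snd f) -> Key e k -> Key f k -> e = f.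
Proof.
  destruct e as [s t], f as [s' t']; simpl. intros h1 h2 [l [hl <-]] [l' [hl' he]].
  apply enc_inj in he; subst l'.
  pose proof (Code_inj _ _ _ hl hl') as hs; simpl in hs; subst s'.
  rewrite (unique_out s t t' h1 h2). auto.
Qed.

Lemma least_nat (P : nat -> Prop) : (exists n, P n) -> exists n, P n /\ forall m, m < n -> ~ P m.
Proof.
  intros [n hn]. apply NNPP. intros hno.
  assert (forall k, forall m, m <= k -> ~ P m).
  { induction k; intros m hm hp.
    - apply hno. exists m. split; auto. intros m' hm'. lia.
    - destruct (Nat.eq_dec m (Datatypes.S k)) as [->|ne].
      + apply hno. exists (Datatypes.S k). split; auto. intros m' hm'. apply IHk. lia.
      + apply (IHk m); auto. lia. }
  apply (H n n); auto.
Qed.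

Definition IsStage C X (e : edge V) n := St C X n e /\ forall m, m < n -> ~ St C X m e.

Lemma Stage_fun C X e n m : IsStage C X e n -> IsStage C X e m -> n = m.
Proof.
  intros [h1 h1'] [h2 h2']. destruct (Nat.lt_trichotomy n m) as [l|[l|l]]; auto.
  - exfalso; apply (h2' n); auto.
  - exfalso; apply (h1' m); auto.
Qed.

Lemma Stage_ex C X e : U C X e -> exists n, IsStage C X e n.
Proof. intros h. apply least_nat in h. exact h. Qed.

Definition Dset C X (e : edge V) := U C X e /\ ~ overflow_start V E C X e.

Definition ltE C X (e f : edge V) := exists n m k j, IsStage C X e n /\ IsStage C X f m /\
  Key e k /\ Key f j /\ (n < m \/ (n = m /\ k < j)).
Lemma ltE_irr C X e : ~ ltE C X e e.
Proof.
  intros [n [m [k [j [h1 [h2 [h3 [h4 h5]]]]]]]].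
  rewrite (Stage_fun _ _ _ _ _ h1 h2), (Key_fun _ _ _ h3 h4) in h5. lia.
Qed.

Lemma D_stage C X e : Dset C X e -> exists n, IsStage C X e n.
Proof. intros [h _]. apply Stage_ex; auto. Qed.

Theorem overflow_U C X (Y : eset V) : (forall e, Y e <-> U C X e) -> overflow_is E C X Y.
Proof.
  intros HY. split.
  - exists (Dset C X), (ltE C X). cbv zeta.
    split; [|split; [|split; [|split; [|split; [|split; [|split]]]]]].
    + intros e. rewrite HY. split.
      * intros h. destruct (classic (overflow_start V E C X e)); auto. right; split; auto.
      * intros [h|[h _]]; auto. exists 0; auto.
    + intros e [h1 h2]. apply U_sub in h1. tauto.
    + intros e _. apply ltE_irr.
    + intros e f g _ _ _ [n [m [k [j [h1 [h2 [h3 [h4 h5]]]]]]]]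
                        [n' [m' [k' [j' [h1' [h2' [h3' [h4' h5']]]]]]]].
      rewrite (Stage_fun _ _ _ _ _ h1' h2), (Key_fun _ _ _ h3' h4) in h5'.
      exists n, m', k, j'. split; [exact h1|split; [exact h2'|split; [exact h3|split; [exact h4'|lia]]]].
    + intros e f he hf. destruct (D_stage _ _ _ he) as [n hn], (D_stage _ _ _ hf) as [m hm].
      destruct (Key_ex e) as [k hk], (Key_ex f) as [j hj].
      destruct (Nat.lt_trichotomy n m) as [l|[l|l]].
      * right; left. exists n, m, k, j. split; [exact hn|split; [exact hm|split; [exact hk|split; [exact hj|lia]]]].
      * subst m. destruct (Nat.lt_trichotomy k j) as [l|[l|l]].
        -- right; left. exists n, n, k, j. split; [exact hn|split; [exact hm|split; [exact hk|split; [exact hj|lia]]]].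
        -- subst j. left. apply (Key_inj e f k); auto.
           ++ apply (U_sub C X e (proj1 he)).
           ++ apply (U_sub C X f (proj1 hf)).
        -- right; right. exists n, n, j, k. split; [exact hm|split; [exact hn|split; [exact hj|split; [exact hk|lia]]]].
      * right; right. exists m, n, j, k. split; [exact hm|split; [exact hn|split; [exact hj|split; [exact hk|lia]]]].
    + intros P HP [e0 he0].
      destruct (least_nat (fun n => exists e, P e /\ IsStage C X e n)) as [n0 [[e1 [he1 hs1]] hmin]].
      { destruct (D_stage _ _ _ (HP e0 he0)) as [n hn]. exists n, e0; auto. }
      destruct (least_nat (fun k => exists e, P e /\ IsStage C X e n0 /\ Key e k)) as [k0 [[m [hm [hsm hkm]]] hmin2]].
      { destruct (Key_ex e1) as [k hk]. exists k, e1; auto. }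
      exists m. split; auto. intros e he [n [m' [k [j [h1 [h2 [h3 [h4 h5]]]]]]]].
      rewrite <- (Stage_fun _ _ _ _ _ hsm h2) in h5. rewrite <- (Key_fun _ _ _ hkm h4) in h5.
      destruct h5 as [l|[-> l]].
      * apply (hmin n l). exists e; auto.
      * apply (hmin2 k l). exists e; auto.
    + intros [s t] [hU hY0]. destruct (D_stage _ _ _ (conj hU hY0)) as [n [hn hnm]].
      destruct n as [|p]. { simpl in hn. tauto. }
      simpl in hn. destruct hn as [hn|[est [nx hi]]]. { exfalso; apply (hnm p); auto. }
      simpl in *.
      assert (nyb : ~ (overflow_start V E C X (s, t) \/ (Dset C X (s, t) /\ ltE C X (s, t) (s, t)))).
      { intros [h|[_ h]]; [tauto|apply ltE_irr in h; auto]. }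
      apply (proj2 (A2_ge1_iff s t _ X est (fun h => nyb h) nx)).
      eapply Nat.lt_le_trans; [exact hi|]. apply inc_mono.
      intros u _ hu.
      destruct (classic (overflow_start V E C X (u, s))) as [h0|h0]; [left; auto|right].
      assert (du : Dset C X (u, s)) by (split; auto; exists p; auto).
      split; auto.
      destruct (D_stage _ _ _ du) as [q [hq hqm]].
      destruct (Key_ex (u, s)) as [k hk], (Key_ex (s, t)) as [j hj].
      exists q, (Datatypes.S p), k, j. split; [split; [exact hq|exact hqm]|].
      split; [split; [simpl; right; split; [exact est|split; [exact nx|exact hi]]|exact hnm]|].
      split; [exact hk|]. split; [exact hj|]. left.
      destruct (Nat.lt_ge_cases p q) as [l|l]; [exfalso; apply (hqm p); auto|lia].
    + intros s t est nx ny. apply (proj2 (A2_le0_iff s t Y X est ny nx)).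
      apply Nat.nlt_ge. intros hi. apply ny. apply HY.
      apply (proj2 (U_closed C X)); auto.
      eapply Nat.lt_le_trans; [exact hi|]. apply inc_mono. intros u _ h; apply HY; auto.
  - intros Z [D' [lt' H]]. cbv zeta in H.
    destruct H as [HZ [HD [Hirr [Htr [Htri [Hwf [Hsucc Hstop]]]]]]].
    assert (DU : forall e, D' e -> U C X e).
    { apply NNPP. intros hno. apply not_all_ex_not in hno. destruct hno as [e0 he0].
      destruct (Hwf (fun e => D' e /\ ~ U C X e)) as [m [[hm hmU] hmin]].
      { intros e [h _]; auto. }
      { exists e0. apply imply_to_and in he0. auto. }
      destruct m as [s t]. destruct (HD _ hm) as [est [nx n0]]. simpl in est.
      pose proof (Hsucc _ hm) as hs. simpl in hs.
      assert (nyb : ~ (overflow_start V E C X (s, t) \/ (D' (s, t) /\ lt' (s, t) (s, t)))).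
      { intros [h|[_ h]]; [tauto|eapply Hirr; eauto]. }
      apply (A2_ge1_iff s t _ X est (fun h => nyb h) nx) in hs.
      apply hmU. apply (proj2 (U_closed C X)); auto.
      eapply Nat.lt_le_trans; [exact hs|]. apply inc_mono.
      intros u _ [h|[hd hl]]. { exists 0; auto. }
      apply NNPP; intros hnu. apply (hmin (u, s)); auto. }
    intros e. rewrite HY. split.
    + intros h. apply HZ in h. destruct h as [h|h]; [exists 0; auto|auto].
    + intros h. eapply U_least; [|exact h]. split.
      * intros f hf. apply HZ; auto.
      * intros s t est nx hi. apply NNPP; intros nz.
        pose proof (Hstop s t est nx nz) as hst.
        apply (A2_le0_iff s t Z X est nz nx) in hst. lia.
Qed.
Lemma final (B R : V -> Prop) : exists X Y : eset V,
    (forall e, X e -> E (fst e) (snd e)) /\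
    (forall e, Y e -> E (fst e) (snd e)) /\
    overflow_is E R X Y /\ overflow_is E B Y X.
Proof.
  set (Phi := fun X : eset V => U B (U R X)).
  assert (mono : forall X1 X2 : eset V, (forall e, X1 e -> X2 e) -> forall e, Phi X1 e -> Phi X2 e).
  { intros X1 X2 h e. unfold Phi. apply U_anti. apply U_anti. auto. }
  set (Xs := fun e : edge V => forall X, (forall f, Phi X f -> X f) -> X e).
  assert (h1 : forall e, Phi Xs e -> Xs e).
  { intros e he X hX. apply hX. eapply mono; [|exact he]. intros f hf. apply hf, hX. }
  assert (h2 : forall e, Xs e -> Phi Xs e).
  { intros e he. apply he. intros f hf. eapply mono; [|exact hf]. exact h1. }
  exists Xs, (U R Xs). split; [|split; [|split]].
  - intros e he. apply (U_sub B (U R Xs) e (h2 e he)).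
  - intros e he. apply (U_sub R Xs e he).
  - apply overflow_U. tauto.
  - apply overflow_U. intros e; split; [exact (h2 e)|exact (h1 e)].
Qed.

End Main.

Theorem lemma2p6 (V : Type) (E : V -> V -> Prop) (r : V)
  (B R : V -> Prop)
  (Htree : rooted_tree E r)
  (Hfin : locally_finite E)
  (HB : forall v, B v -> leaf E v)
  (HR : forall v, R v -> leaf E v)
  (HBR : forall v, ~ (B v /\ R v)) :
  exists X Y : eset V,
    (forall e, X e -> E (fst e) (snd e)) /\
    (forall e, Y e -> E (fst e) (snd e)) /\
    overflow_is E R X Y /\ overflow_is E B Y X.
Proof.
  exact (final V E r Htree Hfin B R).
Qed.
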